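(* Let $U$ be a nonempty finite set and let $R\subseteq U\times U$ be a serial and transitive relation. Then $(Reg(U,R),\subseteq)$ is a semimodular lattice; that is, it is a lattice and for all $X,Y\in Reg(U,R)$, if $Y$ covers $X\wedge Y$ then $X\vee Y$ covers $X$.
   Context: For $x\in U$, the successor neighborhood is $R_s(x)=\{y\in U\mid xRy\}$. $R$ is serial if for every $x\in U$ there is $y\in U$ with $xRy$; $R$ is transitive if $xRy$ and $yRz$ imply $xRz$. For $X\subseteq U$, the lower and upper approximations are $\underline{R}(X)=\{x\in U\mid R_s(x)\subseteq X\}$ and $\overline{R}(X)=\{x\in U\mid R_s(x)\cap X\neq\emptyset\}$. A set $X\subseteq U$ is a regular set if $X=\underline{R}(\overline{R}(X))$; $Reg(U,R)$ denotes the collection of all regular sets, ordered by inclusion. In a poset, $b$ covers $a$ if $a<b$ and there is no $c$ with $a<c<b$. *)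

(* Defs.v *)
From mathcomp Require Import all_boot.
Set Implicit Arguments. Unset Strict Implicit. Unset Printing Implicit Defensive.

Section RoughSets.
Variable U : finType.
Variable R : rel U.

Definition succN (x : U) : {set U} := [set y | R x y].

Definition serial : Prop := forall x : U, exists y : U, R x y.
Definition transitive_rel : Prop := forall x y z : U, R x y -> R y z -> R x z.

Definition lowerA (X : {set U}) : {set U} := [set x | succN x \subset X].
Definition upperA (X : {set U}) : {set U} := [set x | succN x :&: X != set0].

Definition regular (X : {set U}) : Prop := X = lowerA (upperA X).

Definition is_glb (X Y M : {set U}) : Prop :=
  [/\ regular M, M \subset X, M \subset Y &
      forall Z, regular Z -> Z \subset X -> Z \subset Y -> Z \subset M].

Definition is_lub (X Y J : {set U}) : Prop :=
  [/\ regular J, X \subset J, Y \subset J &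
      forall Z, regular Z -> X \subset Z -> Y \subset Z -> J \subset Z].

Definition reg_is_lattice : Prop :=
  forall X Y, regular X -> regular Y ->
    (exists M, is_glb X Y M) /\ (exists J, is_lub X Y J).

Definition reg_covers (A B : {set U}) : Prop :=
  regular A /\ regular B /\ A \proper B /\
  forall C, regular C -> A \proper C -> C \proper B -> False.

End RoughSets.

(* Main.v *)
Require Import Defs.
From mathcomp Require Import all_boot.
From Stdlib Require Import Classical.
Set Implicit Arguments. Unset Strict Implicit. Unset Printing Implicit Defensive.

Section H.
Variable U : finType.
Variable R : rel U.
Hypothesis hser : serial R.
Hypothesis htr : transitive_rel R.

Definition LH (S : {set U}) := lowerA R (upperA R S).
Definition final (y : U) := forall z, R y z -> succN R z = succN R y.

Lemma memLH x (S : {set U}) : x \in LH S <-> forall y, R x y -> exists z, R y z /\ z \in S.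
Proof.
rewrite /LH /lowerA inE; split.
- move=> /subsetP H y xy; have := H y; rewrite /succN inE => /(_ xy).
  rewrite /upperA inE => /set0Pn [z]; rewrite inE /succN inE => /andP[yz zS].
  by exists z.
- move=> H; apply/subsetP => y; rewrite /succN inE => /H [z [yz zS]].
  rewrite /upperA inE; apply/set0Pn; exists z; by rewrite inE /succN inE yz.
Qed.

Lemma finalE : forall x, exists y, R x y /\ final y.
Proof.
move=> x; have [y0 xy0] := hser x.
case: (arg_minnP (fun y => #|succN R y|) xy0) => y xy ymin.
exists y; split => // z yz.
have sub : succN R z \subset succN R y.
  apply/subsetP => w; rewrite !inE => zw; exact: htr yz zw.
apply/eqP; rewrite eqEcard sub /=; apply: ymin; exact: htr xy yz.
Qed.

Lemma finalB x y (S : {set U}) : x \in LH S -> R x y -> final y -> y \in LH S.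
Proof.
move=> /memLH H xy fy; have [z [yz zS]] := H y xy.
apply/memLH => u yu; exists z; split => //.
have : z \in succN R u by rewrite (fy u yu) inE.
by rewrite inE.
Qed.

Lemma finalB' y z (S : {set U}) : final y -> R y z -> z \in LH S -> y \in LH S.
Proof.
move=> fy yz /memLH H; apply/memLH => u yu.
have [w zw] := hser z; have [v [wv vS]] := H w zw.
exists v; split => //.
have : z \in succN R u by rewrite (fy u yu) inE.
rewrite inE => uz; apply: htr uz _; exact: htr zw wv.
Qed.

Lemma LH_mono (S T : {set U}) : S \subset T -> LH S \subset LH T.
Proof.
move=> /subsetP sT; apply/subsetP => x /memLH H; apply/memLH => y /H [z [yz zS]].
by exists z; split => //; apply: sT.
Qed.

Lemma LH_reg (S : {set U}) : regular R (LH S).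
Proof.
rewrite /regular -/(LH (LH S)); apply/eqP; rewrite eqEsubset; apply/andP; split.
- apply/subsetP => x xS; apply/memLH => y xy.
  have [y' [yy' fy']] := finalE y; exists y'; split => //.
  apply: finalB xS _ fy'; exact: htr xy yy'.
- apply/subsetP => x /memLH H; apply/memLH => y /H [z [yz /memLH Hz]].
  have [w zw] := hser z; have [v [wv vS]] := Hz w zw.
  exists v; split => //; apply: htr yz _; exact: htr zw wv.
Qed.

Lemma regB (X : {set U}) x y : regular R X -> x \in X -> R x y -> final y -> y \in X.
Proof. move=> rX; rewrite rX => xX xy fy; exact: finalB xX xy fy. Qed.

Lemma regB' (X : {set U}) y z : regular R X -> final y -> R y z -> z \in X -> y \in X.
Proof. move=> rX; rewrite rX => fy yz zX; exact: finalB' fy yz zX. Qed.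

Lemma reg_incl (X C : {set U}) : regular R X -> regular R C ->
  (forall f, final f -> f \in X -> f \in C) -> X \subset C.
Proof.
move=> rX rC H; apply/subsetP => x xX; rewrite rC; apply/memLH => y xy.
have [y' [yy' fy']] := finalE y; exists y'; split => //.
apply: H => //; apply: regB xX _ fy' => //; exact: htr xy yy'.
Qed.

Lemma reg_inter (X Y : {set U}) : regular R X -> regular R Y -> regular R (X :&: Y).
Proof.
move=> rX rY; rewrite /regular -/(LH _); apply/eqP; rewrite eqEsubset; apply/andP; split.
- apply/subsetP => x; rewrite inE => /andP[xX xY]; apply/memLH => y xy.
  have [y' [yy' fy']] := finalE y; exists y'; split => //.
  have xy' := htr xy yy'.
  by rewrite inE (regB rX xX xy' fy') (regB rY xY xy' fy').
- apply/subsetP => x xL; rewrite inE.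
  have := subsetP (LH_mono (subsetIl X Y)) x xL; rewrite /LH -rX => ->.
  by have := subsetP (LH_mono (subsetIr X Y)) x xL; rewrite /LH -rY => ->.
Qed.

Lemma reg_proper (X C : {set U}) : regular R X -> regular R C -> X \proper C ->
  exists f, [/\ final f, f \in C & f \notin X].
Proof.
move=> rX rC; rewrite properE => /andP[_ nCX].
apply: NNPP => H; move/negP: nCX; apply; apply: reg_incl => // f ff fC.
apply/negPn/negP => fX; apply: H; by exists f.
Qed.

Lemma join_final (X Y J : {set U}) f : J \subset LH (X :|: Y) ->
  regular R X -> regular R Y -> final f -> f \in J -> f \in X \/ f \in Y.
Proof.
move=> /subsetP JL rX rY ff /JL /memLH H.
have [y fy] := hser f; have [z [yz]] := H y fy.
have fz := htr fy yz.
rewrite inE => /orP[zX|zY]; [left; exact: regB' rX ff fz zX | right; exact: regB' rY ff fz zY].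
Qed.

End H.

Theorem proposition1 (U : finType) (R : rel U)
  (hU : 0 < #|U|) (hser : serial R) (htr : transitive_rel R) :
  reg_is_lattice R /\
  (forall X Y M J : {set U}, regular R X -> regular R Y ->
     is_glb R X Y M -> is_lub R X Y J ->
     reg_covers R M Y -> reg_covers R X J).
Proof.
split.
- move=> X Y rX rY; split.
  + exists (X :&: Y); split; [exact: reg_inter | exact: subsetIl | exact: subsetIr |].
    by move=> Z _ ZX ZY; rewrite subsetI ZX ZY.
  + exists (LH R (X :|: Y)); split; first exact: LH_reg.
    * rewrite {1}rX; apply: LH_mono; exact: subsetUl.
    * rewrite {1}rY; apply: LH_mono; exact: subsetUr.
    * move=> Z rZ XZ YZ; rewrite rZ; apply: LH_mono; by rewrite subUset XZ YZ.
move=> X Y M J rX rY [rM MX MY Mmax] [rJ XJ YJ Jmin] [_ [_ [MY' Mcov]]].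
have eM : M = X :&: Y.
  apply/eqP; rewrite eqEsubset subsetI MX MY /=; apply: Mmax; [exact: reg_inter | exact: subsetIl | exact: subsetIr].
have JL : J \subset LH R (X :|: Y) by apply: Jmin; [exact: LH_reg | rewrite {1}rX; apply: LH_mono; exact: subsetUl | rewrite {1}rY; apply: LH_mono; exact: subsetUr].
have [f [ff fY fM]] := reg_proper hser htr rM rY MY'.
have fX : f \notin X by apply: contra fM => fX; rewrite eM inE fX fY.
split => //; split => //; split.
  rewrite properE XJ /=; apply/negP => /subsetP JX; move/negP: fX; apply; apply: JX; exact: (subsetP YJ).
move=> C rC XC CJ.
have [c [fc cC cX]] := reg_proper hser htr rX rC XC.
have [j [fj jJ jC]] := reg_proper hser htr rC rJ CJ.
have cJ : c \in J by apply: (subsetP (proper_sub CJ)).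
have cY : c \in Y by case: (join_final hser htr JL rX rY fc cJ) => // h; rewrite h in cX.
have jY : j \in Y.
  case: (join_final hser htr JL rX rY fj jJ) => // h.
  by rewrite (subsetP (proper_sub XC) _ h) in jC.
apply: (Mcov (C :&: Y)); first exact: reg_inter.
- rewrite properE; apply/andP; split.
  + rewrite eM; apply: setSI; exact: proper_sub.
  + apply/negP => /subsetP h; have := h c; rewrite inE cC cY eM inE (negbTE cX) => /(_ isT).
    done.
- rewrite properE subsetIr /=; apply/negP => /subsetP h; have := h j jY; rewrite inE (negbTE jC).
  done.
Qed.
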